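(* Let $\langle A,\to\rangle$ be a conditional algebra that also satisfies $(a\to c)\wedge(b\to c)\le(a\vee b)\to c$ for all $a,b,c$. Let $F,H$ be filters of $A$ with $F\neq A$, and let $u$ be an ultrafilter. If $D^{\to}_H(F)\subseteq u$, then there exists an ultrafilter $v$ with $F\subseteq v$ and $D^{\to}_H(v)\subseteq u$.
   Context: A conditional algebra is $\langle A,\to\rangle$ with $A$ a Boolean algebra and $\to$ binary with $a\to1=1$, $(a\to b)\wedge(a\to c)=a\to(b\wedge c)$, $(a\vee b)\to c\le(a\to c)\wedge(b\to c)$. Filters include the improper filter $A$. For $X,Y\subseteq A$, $D^{\to}_X(Y)=\{b\in A:\exists a\in Y,\ a\to b\in X\}$. *)

(* Defs.v *)
From HB Require Import structures.
From mathcomp Require Import all_boot all_order.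
Set Implicit Arguments. Unset Strict Implicit. Unset Printing Implicit Defensive.
Import Order.Theory.
Local Open Scope order_scope.

(* A Boolean algebra is a complemented distributive lattice with top and
   bottom: MathComp's [ctbDistrLatticeType d].  Subsets of A are [T -> Prop]. *)

Section Cond.
Context {d : Order.disp_t} {T : ctbDistrLatticeType d}.

Definition conditional_algebra (imp : T -> T -> T) : Prop :=
  [/\ (forall a, imp a \top = \top),
      (forall a b c, imp a b `&` imp a c = imp a (b `&` c)) &
      (forall a b c, imp (a `|` b) c <= imp a c `&` imp b c)].

(* filters (the improper filter [fun _ => True] is allowed) *)
Definition is_filter (F : T -> Prop) : Prop :=
  [/\ F \top,
      (forall a b, F a -> a <= b -> F b) &
      (forall a b, F a -> F b -> F (a `&` b))].

Definition proper_filter (F : T -> Prop) : Prop :=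
  is_filter F /\ exists a, ~ F a.

Definition ultrafilter (U : T -> Prop) : Prop :=
  proper_filter U /\
  forall G : T -> Prop, proper_filter G -> (forall a, U a -> G a) ->
    forall a, G a -> U a.

Definition Dimp (imp : T -> T -> T) (X Y : T -> Prop) : T -> Prop :=
  fun b => exists a, Y a /\ X (imp a b).

End Cond.

(* Main.v *)
Require Import Defs.
From HB Require Import structures.
From mathcomp Require Import all_boot all_order.
From mathcomp Require Import classical_sets.
From Stdlib Require Import Classical_Prop.
Import Order.Theory.
Local Open Scope order_scope.

Section Helpers.
Context {d : Order.disp_t} {T : ctbDistrLatticeType d}.

Lemma filter_bot (G : T -> Prop) : is_filter G -> G \bot -> forall a, G a.
Proof. by case=> _ Hup _ Hb a; apply: (Hup _ _ Hb); rewrite le0x. Qed.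

Definition genf (G : T -> Prop) (x : T) : T -> Prop :=
  fun y => exists f, G f /\ f `&` x <= y.

Lemma genf_filter G x : is_filter G -> is_filter (genf G x).
Proof.
case=> Ht Hup Hm; split.
- by exists \top; split => //; rewrite le_x1.
- move=> a b [f [Gf Hf]] ab; exists f; split => //; exact: le_trans Hf ab.
- move=> a b [f [Gf Hf]] [g [Gg Hg]]; exists (f `&` g); split; first exact: Hm.
  rewrite lexI; apply/andP; split.
  + apply: le_trans Hf; apply: leI2 => //; exact: leIl.
  + apply: le_trans Hg; apply: leI2 => //; exact: leIr.
Qed.

Lemma genf_sub G x : is_filter G -> forall a, G a -> genf G x a.
Proof. by move=> _ a Ga; exists a; split => //; exact: leIl. Qed.

Lemma genf_x G x : is_filter G -> genf G x x.
Proof. by case=> Ht _ _; exists \top; split => //; exact: leIr. Qed.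

Lemma ult_prime (U : T -> Prop) : ultrafilter U -> forall x, U x \/ U (~` x).
Proof.
move=> [[UF Upr] Umax] x.
case: (classic (U x)) => Ux; [by left | right].
case: (classic (exists a, ~ genf U x a)) => Hex.
- exfalso; apply: Ux; apply: (Umax (genf U x)).
  + by split => //; exact: genf_filter.
  + exact: genf_sub.
  + exact: genf_x.
- have : genf U x \bot.
    by apply: NNPP => Hn; apply: Hex; exists \bot.
  case=> f [Uf Hf]; case: UF => _ Hup _; apply: (Hup _ _ Uf).
  by rewrite -disj_leC -lex0.
Qed.

Lemma meet_split (f f' x j1 j2 : T) :
  f `&` x <= j1 -> f' `&` ~` x <= j2 -> f `&` f' <= j1 `|` j2.
Proof.
move=> H1 H2.
rewrite -[f `&` f']meetx1 -(joinxC x) meetUr leUx; apply/andP; split.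
- apply: le_trans (leUl _ _); apply: le_trans H1; apply: leI2 => //; exact: leIl.
- apply: le_trans (leUr _ _); apply: le_trans H2; apply: leI2 => //; exact: leIr.
Qed.

End Helpers.

Theorem lemma9p2 (d : Order.disp_t) (T : ctbDistrLatticeType d)
    (imp : T -> T -> T)
    (Hca : conditional_algebra imp)
    (Hjoin : forall a b c : T, imp a c `&` imp b c <= imp (a `|` b) c)
    (F H u : T -> Prop)
    (HF : is_filter F) (HFne : exists a, ~ F a)
    (HH : is_filter H) (Hu : ultrafilter u)
    (Hsub : forall b, Dimp imp H F b -> u b) :
  exists v : T -> Prop, ultrafilter v /\ (forall a, F a -> v a) /\
    (forall b, Dimp imp H v b -> u b).
Proof.
case: Hca => Hi1 Hi2 Hi3.
have mono2 : forall a b c, b <= c -> imp a b <= imp a c.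
  move=> a b c bc; rewrite -(meet_l bc) -Hi2; exact: leIr.
have anti1 : forall a a' b, a' <= a -> imp a b <= imp a' b.
  move=> a a' b aa; rewrite -(join_r aa).
  apply: le_trans (Hi3 _ _ _) _; exact: leIl.
have uprime := @ult_prime _ _ u Hu.
have [[ufil [z0 nuz0]] _] := Hu.
have [uT uup umeet] := ufil.
have unj : forall b1 b2, ~ u b1 -> ~ u b2 -> ~ u (b1 `|` b2).
  move=> b1 b2 n1 n2 u12.
  have c1 : u (~` b1) by case: (uprime b1).
  have c2 : u (~` b2) by case: (uprime b2).
  have c12 : u (~` (b1 `|` b2)) by rewrite complU; exact: umeet.
  have ub : u \bot by rewrite -(meetxC (b1 `|` b2)); exact: umeet.
  by apply: nuz0; exact: (filter_bot _ ufil ub z0).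
case: HH => HT Hup Hm.
pose J (a : T) := a = \bot \/ exists b, ~ u b /\ H (imp a b).
have Jdown : forall a j, a <= j -> J j -> J a.
  move=> a j aj [Ej|[b [nb Hb]]].
  - by left; apply/eqP; rewrite -lex0 -Ej.
  - by right; exists b; split => //; apply: (Hup _ _ Hb); exact: anti1.
have Jjoin : forall j1 j2, J j1 -> J j2 -> J (j1 `|` j2).
  move=> j1 j2 [->|[b1 [n1 H1]]].
    by rewrite join0x.
  move=> [->|[b2 [n2 H2]]].
    by rewrite joinx0; right; exists b1.
  right; exists (b1 `|` b2); split; first exact: unj.
  apply: (Hup _ _ _ (Hjoin _ _ _)); apply: Hm.
  + by apply: (Hup _ _ H1); apply: mono2; exact: leUl.
  + by apply: (Hup _ _ H2); apply: mono2; exact: leUr.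
pose Good (G : T -> Prop) := [/\ is_filter G, (forall a, F a -> G a) &
                                 (forall a, G a -> ~ J a)].
have GoodF : Good F.
  split => // a Fa [Ea|[b [nb Hb]]].
  - case: HFne => c nc; apply: nc; apply: (filter_bot _ HF _ c); by rewrite -Ea.
  - by apply: nb; apply: Hsub; exists a.
pose P (A : T -> Prop) := Good A \/ (forall x, ~ A x).
have [v [Pv vmax]] : exists A, P A /\ forall B, proper A B -> ~ P B.
  apply: Zorn_bigcup => C CP Ctot.
  case: (classic (exists X, C X /\ Good X)) => [[X0 [CX0 GX0]]|nex]; last first.
    right => x [X CX Xx].
    case: (CP X CX) => [GX|EX]; last exact: (EX x).
    by apply: nex; exists X.
  have goodof : forall X x, C X -> X x -> Good X.
    move=> X x CX Xx; case: (CP X CX) => // EX; by case: (EX x).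
  case: GX0 => [[X0T _ _] X0F _].
  left; split.
  - split.
    + by exists X0.
    + move=> a b [X CX Xa] ab; exists X => //.
      by case: (goodof X a CX Xa) => [[_ up _] _ _]; exact: up Xa ab.
    + move=> a b [X CX Xa] [Y CY Yb].
      case: (Ctot X Y CX CY) => XY.
      * exists Y => //; case: (goodof Y b CY Yb) => [[_ _ mm] _ _].
        by apply: mm => //; exact: XY.
      * exists X => //; case: (goodof X a CX Xa) => [[_ _ mm] _ _].
        by apply: mm => //; exact: XY.
  - by move=> a Fa; exists X0 => //; exact: X0F.
  - by move=> a [X CX Xa]; case: (goodof X a CX Xa) => _ _; apply.
have Gv : Good v.
  case: Pv => // Ev; exfalso; apply: (vmax F) => //; last by left.
  split; first by move=> x vx; case: (Ev x).
  case: HF => FT _ _; move=> /(_ \top FT); exact: Ev.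
case: Gv => vfil vF vJ.
have vprime : forall x, v x \/ v (~` x).
  move=> x; apply: NNPP => nn.
  have nx : ~ v x by move=> vx; apply: nn; left.
  have ncx : ~ v (~` x) by move=> vx; apply: nn; right.
  have ext : forall y, ~ v y -> exists j f, J j /\ v f /\ f `&` y <= j.
    move=> y ny; apply: NNPP => nej; apply: (vmax (genf v y)).
    - split; first exact: genf_sub.
      by move=> /(_ y (genf_x _ y vfil)).
    - left; split.
      + exact: genf_filter.
      + by move=> a Fa; apply: genf_sub => //; exact: vF.
      + move=> a [f [vf Hf]] Ja; apply: nej; by exists a, f.
  have [j1 [f1 [J1 [v1 H1]]]] := ext x nx.
  have [j2 [f2 [J2 [v2 H2]]]] := ext _ ncx.
  apply: (vJ (f1 `&` f2)).
  - by case: vfil => _ _; apply.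
  - apply: (Jdown _ (j1 `|` j2)); last exact: Jjoin.
    exact: meet_split H1 H2.
exists v; split; last split => //.
- split.
  + split => //; exists \bot => vb; apply: (vJ \bot vb); by left.
  + move=> G [Gfil [a0 na0]] vG a Ga.
    case: (vprime a) => // vca; exfalso; apply: na0.
    apply: (filter_bot _ Gfil _ a0); rewrite -(meetxC a).
    by case: Gfil => _ _; apply => //; exact: vG.
- move=> b [a [va Hab]]; apply: NNPP => nb.
  by apply: (vJ a va); right; exists b.
Qed.
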